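(* Let $X$ be a Banach space, $D\subset X$ closed, bounded and convex, and $\tau$ a locally convex topology on $D$ containing the relative weak topology of $D$. Let $C$ be a convex subset of $D$, $\varepsilon>0$, $n,k\in\mathbb{N}$, $\lambda\in S^+_{\ell_1^n}$, $\{x_1,\dots,x_k\}\subset X$, and let $(\widetilde O_i)_{i=1}^n$ be nonempty sets in $\tau|_C$. Then for each $1\le i\le n$ there is a nonempty $\tau|_{\widetilde O_i}$-open set $O_i$ such that $$\operatorname{diam}\Big(\sum_{i=1}^n\lambda(i)O_i\Big)\le SD(\lambda,(O_i))+\varepsilon$$ and $$d\Big(\{x_1,\dots,x_k\},\sum_{i=1}^n\lambda(i)O_i\Big)\ge \frac{SD(\lambda,(O_i))}{2}-\varepsilon.$$
   Context: $\tau|_C$ is the topology induced by $\tau$ on $C$; locally convex means having a basis of convex open sets. $S^+_{\ell_1^n}=\{\lambda\in\mathbb{R}^n:\lambda(i)\ge0,\ \sum_i\lambda(i)=1\}$. Sums of sets are Minkowski sums. For nonempty sets $O_1,\dots,O_n\in\tau|_C$ and $\lambda\in S^+_{\ell_1^n}$, the sub-diameter is $$SD(\lambda,(O_i))=\inf\Big\{\operatorname{diam}\Big(\sum_i\lambda(i)U_i\Big): U_i \text{ nonempty and } U_i\in\tau|_{O_i}\text{ for }1\le i\le n\Big\}.$$ $d(A,B)=\inf\{\|a-b\|:a\in A,b\in B\}$. *)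

(* Defs.v *)
From HB Require Import structures.
From mathcomp Require Import all_boot all_order all_algebra.
From mathcomp Require Import all_classical all_reals all_analysis.
Set Implicit Arguments. Unset Strict Implicit. Unset Printing Implicit Defensive.
Import Order.TTheory GRing.Theory Num.Theory.
Import numFieldNormedType.Exports.
Local Open Scope classical_set_scope.
Local Open Scope ring_scope.

Section Defs.
Context {R : realType} {X : normedModType R}.

Definition cvx_set (A : set X) : Prop :=
  forall x y (t : R), A x -> A y -> 0 <= t -> t <= 1 -> A (t *: x + (1 - t) *: y).

Definition is_topology_on (D : set X) (tau : set (set X)) : Prop :=
  [/\ (forall U, tau U -> U `<=` D),
      tau set0, tau D,
      (forall U V, tau U -> tau V -> tau (U `&` V)) &
      (forall (F : set (set X)), F `<=` tau -> tau (\bigcup_(U in F) U))].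

Definition locally_convex_top (tau : set (set X)) : Prop :=
  forall U x, tau U -> U x -> exists V, [/\ tau V, cvx_set V, V x & V `<=` U].

Definition weakly_open (W : set X) : Prop :=
  forall x, W x -> exists (m : nat) (f : 'I_m -> {linear X -> R^o}) (e : R),
    [/\ (forall j, continuous (f j)), 0 < e &
        [set y | forall j, `|f j (y - x)| < e] `<=` W].

Definition contains_rel_weak (D : set X) (tau : set (set X)) : Prop :=
  forall W, weakly_open W -> tau (D `&` W).

Definition rel_open (tau : set (set X)) (A : set X) (O : set X) : Prop :=
  exists U, tau U /\ O = A `&` U.

Definition diam (A : set X) : \bar R :=
  ereal_sup [set (`|a - b|)%:E | a in A & b in A].

Definition set_dist (A B : set X) : \bar R :=
  ereal_inf [set (`|a - b|)%:E | a in A & b in B].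

Definition mink_comb (n : nat) (lam : 'I_n -> R) (O : 'I_n -> set X) : set X :=
  [set z | exists y : 'I_n -> X, (forall i, O i (y i)) /\ z = \sum_(i < n) lam i *: y i].

Definition pos_simplex (n : nat) (lam : 'I_n -> R) : Prop :=
  (forall i, 0 <= lam i) /\ \sum_(i < n) lam i = 1.

Definition subdiam (tau : set (set X)) (n : nat) (lam : 'I_n -> R) (O : 'I_n -> set X) : \bar R :=
  ereal_inf [set diam (mink_comb lam U) | U in
    [set U : 'I_n -> set X | forall i, U i !=set0 /\ rel_open tau (O i) (U i)]].

End Defs.

(* Main.v *)
Require Import Defs.
From HB Require Import structures.
From mathcomp Require Import all_boot all_order all_algebra.
From mathcomp Require Import all_classical all_reals all_analysis.
Import Order.TTheory GRing.Theory Num.Theory.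
Import numFieldNormedType.Exports.
Local Open Scope classical_set_scope.
Local Open Scope ring_scope.
From mathcomp Require Import ring lra.

Set Implicit Arguments. Unset Strict Implicit. Unset Printing Implicit Defensive.
Section HBsec.
Context {R : realType} {X : normedModType R}.

Definition lgraph (G : set (X * R)) : Prop :=
 [/\ forall a r s, G (a,r) -> G (a,s) -> r = s,
     forall a b r s, G (a,r) -> G (b,s) -> G (a+b, r+s),
     forall a r c, G (a,r) -> G (c *: a, c * r) &
     forall a r, G (a,r) -> r <= `|a|].

Lemma lgraph_chain (F : set (set (X * R))) :
  F `<=` lgraph -> total_on F subset -> lgraph (\bigcup_(G in F) G).
Proof.
move=> FP tot; split.
- move=> a r s [G1 F1 H1] [G2 F2 H2].
  have [S|S] := tot _ _ F1 F2.
  + by case: (FP _ F2) => fun_ _ _ _; apply: fun_ (S _ H1) H2.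
  + by case: (FP _ F1) => fun_ _ _ _; apply: fun_ H1 (S _ H2).
- move=> a b r s [G1 F1 H1] [G2 F2 H2].
  have [S|S] := tot _ _ F1 F2.
  + by exists G2 => //; case: (FP _ F2) => _ add_ _ _; apply: add_ (S _ H1) H2.
  + by exists G1 => //; case: (FP _ F1) => _ add_ _ _; apply: add_ H1 (S _ H2).
- move=> a r c [G1 F1 H1]; exists G1 => //.
  by case: (FP _ F1) => _ _ sc _; apply: sc.
- by move=> a r [G1 F1 H1]; case: (FP _ F1) => _ _ _ dom; apply: dom.
Qed.

Lemma lgraph0 G : lgraph G -> G !=set0 -> G (0, 0).
Proof.
case=> _ _ sc _ [[a r] H]; have := sc _ _ 0 H.
by rewrite scale0r mul0r.
Qed.

Lemma lgraph_ext G w : lgraph G -> G !=set0 -> ~ (exists r, G (w, r)) ->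
  exists G', [/\ lgraph G', G `<=` G' & exists r, G' (w, r)].
Proof.
move=> lG G0 nw; have G00 := lgraph0 lG G0.
case: lG => fun_ add_ sc dom.
pose S := [set y | exists a g, G (a, g) /\ y = g - `|a - w|].
have key : forall a g b h, G (a, g) -> G (b, h) -> g - `|a - w| <= `|b + w| - h.
  move=> a g b h Ha Hb.
  have := dom _ _ (add_ _ _ _ _ Ha Hb).
  have : `|a + b| <= `|a - w| + `|b + w|.
    by rewrite (_ : a + b = (a - w) + (b + w)) ?ler_normD //; rewrite addrACA addNr addr0.
  lra.
have S0 : S !=set0 by exists (0 - `|0 - w|); exists 0, 0.
have Sub : ubound S (`|0 + w| - 0).
  by move=> y [a [g [Ha ->]]]; apply: key Ha G00.
pose c := sup S.
have c1 : forall a g, G (a, g) -> g - `|a - w| <= c.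
  move=> a g Ha; apply: ub_le_sup; first by exists (`|0 + w| - 0).
  by exists a, g.
have c2 : forall b h, G (b, h) -> c <= `|b + w| - h.
  move=> b h Hb; apply: ge_sup => // y [a [g [Ha ->]]]; exact: key Ha Hb.
pose G' := [set p | exists a g t, G (a, g) /\ p = (a + t *: w, g + t * c)].
exists G'; split.
- split.
  + move=> a r s [a1 [g1 [t1 [H1 E1]]]] [a2 [g2 [t2 [H2 E2]]]].
    case: E1 => Ea1 ->; case: E2 => Ea2 ->.
    have [tt|tt] := eqVneq t1 t2.
      subst t2; have ea : a1 = a2.
        by apply: (addIr (t1 *: w)); rewrite -Ea1 -Ea2.
      by subst a2; rewrite (fun_ _ _ _ H1 H2).
    exfalso; apply: nw; exists ((t2 - t1)^-1 * (g1 - g2)).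
    have Hd : G (a1 - a2, g1 - g2).
      apply: add_ H1 _; have := sc _ _ (-1) H2.
      by rewrite scaleN1r mulN1r.
    have := sc _ _ ((t2 - t1)^-1) Hd.
    have -> // : (t2 - t1)^-1 *: (a1 - a2) = w.
    have e : a1 - a2 = (t2 - t1) *: w.
      rewrite scalerBl; apply: (addIr (t1 *: w)); rewrite addrAC -Ea1 Ea2.
      by rewrite [LHS]addrAC subrr add0r subrK.
    by rewrite e scalerA mulVf ?scale1r // subr_eq0 eq_sym.
  + move=> a b r s [a1 [g1 [t1 [H1 E1]]]] [a2 [g2 [t2 [H2 E2]]]].
    case: E1 => -> ->; case: E2 => -> ->.
    exists (a1 + a2), (g1 + g2), (t1 + t2); split; first exact: add_.
    congr pair; first by rewrite scalerDl; rewrite !addrA; congr (_ + _); rewrite addrAC.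
    ring.
  + move=> a r k [a1 [g1 [t1 [H1 E1]]]]; case: E1 => -> ->.
    exists (k *: a1), (k * g1), (k * t1); split; first exact: sc.
    by congr pair; [rewrite scalerDr scalerA | ring].
  + move=> a r [a1 [g1 [t1 [H1 E1]]]]; case: E1 => -> ->.
    have [t0|tp|tn] := ltgtP t1 0.
    * pose s := - t1; have sp : 0 < s by rewrite /s oppr_gt0.
      have := c1 _ _ (sc _ _ (s^-1) H1).
      have -> : s^-1 *: a1 - w = s^-1 *: (a1 + t1 *: w).
        rewrite scalerDr scalerA /s invrN mulNr mulVf ?scaleN1r ?(ltr0_neq0 t0) //.
      rewrite normrZ gtr0_norm ?invr_gt0 // => h.
      move: h => /(ler_wpM2l (ltW sp)); rewrite mulrBr !mulrA mulfV ?gt_eqF // !mul1r /s; lra.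
    * have := c2 _ _ (sc _ _ (t1^-1) H1).
      have -> : t1^-1 *: a1 + w = t1^-1 *: (a1 + t1 *: w).
        by rewrite scalerDr scalerA mulVf ?scale1r // gt_eqF.
      rewrite normrZ gtr0_norm ?invr_gt0 // => h.
      move: h => /(ler_wpM2l (ltW tp)); rewrite mulrBr !mulrA mulfV ?gt_eqF // !mul1r; lra.
    * by subst t1; rewrite scale0r addr0 mul0r addr0; apply: dom.
- move=> [a g] H; exists a, g, 0; split => //.
  by rewrite scale0r addr0 mul0r addr0.
- exists (0 + 1 * c); exists 0, 0, 1; split => //.
  by rewrite !add0r scale1r.
Qed.

Lemma hb_exists (v : X) : exists f : X -> R,
  [/\ forall a b, f (a + b) = f a + f b, forall k a, f (k *: a) = k * f a,
      forall y, `|f y| <= `|y| & f v = `|v|].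
Proof.
pose P := fun G : set (X * R) => lgraph G /\ (G !=set0 -> G (v, `|v|)).
have [A [[lA Av] maxA]] : exists A, P A /\ forall B, A `<` B -> ~ P B.
  apply: Zorn_bigcup => F FP tot; split.
  - by apply: lgraph_chain => // G /FP [].
  - move=> [p [G FG Gp]]; exists G => //; apply: (FP G FG).2; by exists p.
pose L := [set p : X * R | exists t, p = (t *: v, t * `|v|)].
have Lv : L (v, `|v|) by exists 1; rewrite scale1r mul1r.
have lL : lgraph L.
  split.
  + move=> a r s [t1 E1] [t2 E2]; case: E1 => Ea ->; case: E2 => e ->.
    rewrite Ea in e.
    have [v0|vn0] := eqVneq v 0; first by rewrite v0 normr0 !mulr0.
    have : (t1 - t2) *: v = 0 by rewrite scalerBl e subrr.
    by move/eqP; rewrite scaler_eq0 (negbTE vn0) orbF subr_eq0 => /eqP ->.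
  + move=> a b r s [t1 E1] [t2 E2]; case: E1 => -> ->; case: E2 => -> ->.
    by exists (t1 + t2); rewrite scalerDl mulrDl.
  + move=> a r k [t1 E1]; case: E1 => -> ->.
    by exists (k * t1); rewrite scalerA mulrA.
  + move=> a r [t1 E1]; case: E1 => -> ->.
    by rewrite normrZ ler_wpM2r // ler_norm.
have A0 : A !=set0.
  apply: contrapT => nA.
  have eA : A = set0 by apply/seteqP; split => // p Ap; apply: nA; exists p.
  apply: (maxA L); last by split => // _.
  rewrite eA; split => // H; by have := H _ Lv.
have full : forall w, exists r, A (w, r).
  move=> w; apply: contrapT => nw.
  have [G' [lG' AG' [r Gw]]] := lgraph_ext lA A0 nw.
  apply: (maxA G').
    by split => // H; apply: nw; exists r; apply: H.
  by split => // _; apply: AG'; apply: Av.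
have /choice [f Hf] := full.
exists f; case: lA => fun_ add_ sc dom; split.
- by move=> a b; apply: fun_ (Hf (a + b)) (add_ _ _ _ _ (Hf a) (Hf b)).
- by move=> k a; apply: fun_ (Hf _) (sc _ _ k (Hf a)).
- move=> y; rewrite ler_norml; apply/andP; split; last exact: dom _ _ (Hf y).
  have := dom _ _ (sc _ _ (-1) (Hf y)); rewrite scaleN1r normrN mulN1r; lra.
- exact: fun_ (Hf v) (Av A0).
Qed.
End HBsec.

Section HBlin.
Context {R : realType} {X : normedModType R}.
Definition hbf (v : X) : X -> R^o := projT1 (cid (hb_exists v)).
Lemma hbf_spec (v : X) : [/\ forall a b, hbf v (a + b) = hbf v a + hbf v b,
   forall k a, hbf v (k *: a) = k * hbf v a,
   forall y, `|hbf v y| <= `|y| & hbf v v = `|v|].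
Proof. exact: projT2 (cid (hb_exists v)). Qed.
Lemma hbf_lin (v : X) : linear (hbf v).
Proof. by move=> k a b; case: (hbf_spec v) => hD hZ _ _; rewrite hD hZ. Qed.
HB.instance Definition _ (v : X) := GRing.isLinear.Build R X R^o *:%R (hbf v) (hbf_lin v).

Lemma hb_functional (v : X) : exists f : {linear X -> R^o},
  [/\ continuous f, forall y, `|f y| <= `|y| & f v = `|v|].
Proof.
exists (hbf v : {linear X -> R^o}); case: (hbf_spec v) => _ _ hn hv; split => //.
apply: bounded_linear_continuous; apply/linear_boundedP.
near=> r => y; rewrite (le_trans (hn y)) // ler_peMl //.
Unshelve. all: by end_near. Qed.
End HBlin.

Section Main.
Variables (R : realType) (X : normedModType R) (D : set X) (tau : set (set X)).
Variables (n : nat) (lam : 'I_n -> R) (C : set X) (Ot : 'I_n -> set X).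
Hypothesis htop : is_topology_on D tau.
Hypothesis hweak : contains_rel_weak D tau.
Hypothesis hlam : pos_simplex lam.
Hypothesis hC : C `<=` D.
Hypothesis hOt : forall i, Ot i !=set0 /\ rel_open tau C (Ot i).

Lemma rel_open_sub (A O : set X) : rel_open tau A O -> O `<=` A.
Proof. by move=> [U [_ ->]] z []. Qed.

Lemma rel_open_trans (A O O' : set X) : rel_open tau A O -> rel_open tau O O' -> rel_open tau A O'.
Proof.
move=> [U [tU ->]] [V [tV ->]]; exists (U `&` V); split; last by rewrite setIA.
by case: htop => _ _ _ hI _; apply: hI.
Qed.

Lemma rel_open_self (O : set X) : O `<=` D -> rel_open tau O O.
Proof. by move=> OD; exists D; split; [case: htop | rewrite setIidl]. Qed.

Definition adm (B U : 'I_n -> set X) := forall i, U i !=set0 /\ rel_open tau (B i) (U i).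

Lemma mink_mono (U V : 'I_n -> set X) : (forall i, V i `<=` U i) -> mink_comb lam V `<=` mink_comb lam U.
Proof. by move=> s z [y [Hy ->]]; exists y; split => // i; apply: s; apply: Hy. Qed.

Lemma mink_bound M (U : 'I_n -> set X) : 0 <= M -> (forall i y, U i y -> `|y| <= M) ->
  forall z, mink_comb lam U z -> `|z| <= M.
Proof.
move=> M0 hU z [y [Hy ->]]; case: hlam => l0 l1.
apply: le_trans (ler_norm_sum _ _ _) _.
rewrite -[M in _ <= M]mul1r -l1 mulr_suml; apply: ler_sum => i _.
by rewrite normrZ ger0_norm //; apply: ler_wpM2l => //; apply: hU; apply: Hy.
Qed.

Lemma mink_nonempty (U : 'I_n -> set X) : (forall i, U i !=set0) -> mink_comb lam U !=set0.
Proof.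
move=> hU; have /choice [y Hy] : forall i, exists y, U i y.
  by move=> i; case: (hU i) => y; exists y.
by exists (\sum_i lam i *: y i); exists y.
Qed.

Lemma diam_ge0 (A : set X) : A !=set0 -> (0 <= diam A)%E.
Proof.
move=> [a Aa]; apply: le_trans (ereal_sup_ubound _); last first.
  by exists a => //; exists a => //. 
by rewrite subrr normr0.
Qed.

Lemma diam_le M (A : set X) : (forall z, A z -> `|z| <= M) -> (diam A <= (2 * M)%:E)%E.
Proof.
move=> hA; apply: ge_ereal_sup => _ [a Aa [b Ab <-]]; rewrite lee_fin.
apply: le_trans (ler_normB a b) _; have := hA a Aa; have := hA b Ab; lra.
Qed.

Lemma diam_mono (A B : set X) : A `<=` B -> (diam A <= diam B)%E.
Proof.
move=> AB; apply: ereal_sup_le => _ [a Aa [b Ab <-]].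
by exists a; [apply: AB|exists b; [apply: AB|]].
Qed.

Lemma subdiam_mono (B B' : 'I_n -> set X) : (forall U, adm B' U -> adm B U) ->
  (subdiam tau lam B <= subdiam tau lam B')%E.
Proof. by move=> h; apply: ereal_inf_le_tmp => _ [U hU <-]; exists U => //; apply: h. Qed.

Lemma subdiam_le (B U : 'I_n -> set X) : adm B U -> (subdiam tau lam B <= diam (mink_comb lam U))%E.
Proof. by move=> h; apply: ereal_inf_lbound; exists U. Qed.

Lemma adm_D (U : 'I_n -> set X) : adm Ot U -> forall i, U i `<=` D.
Proof.
move=> h i z Uz; apply: hC; apply: (rel_open_sub (hOt i).2).
exact: (rel_open_sub (h i).2).
Qed.

Lemma adm_trans (B U V : 'I_n -> set X) : adm B U -> adm U V -> adm B V.
Proof. by move=> hU hV i; split; [exact: (hV i).1 | exact: rel_open_trans (hU i).2 (hV i).2]. Qed.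

Lemma adm_self (U : 'I_n -> set X) : adm Ot U -> adm U U.
Proof. by move=> h i; split; [exact: (h i).1 | apply: rel_open_self; apply: adm_D h i]. Qed.

Lemma shrink (eps sr : R) (U : 'I_n -> set X) (x0 : X) : 0 < eps -> subdiam tau lam Ot = sr%:E -> adm Ot U ->
  exists V, adm U V /\ forall z, mink_comb lam V z -> sr/2 - 3*eps/4 <= `|x0 - z|.
Proof.
move=> eps0 hs hU.
have [hle|hgt] := lerP (sr/2 - 3*eps/4) 0.
  exists U; split; first exact: adm_self.
  by move=> z _; apply: le_trans hle _.
have hd : ((sr - eps/2)%:E < diam (mink_comb lam U))%E.
  apply: lt_le_trans (subdiam_le hU); rewrite hs lte_fin; lra.
have [a [b [ma mb hab]]] : exists a b, [/\ mink_comb lam U a, mink_comb lam U b &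
    sr - eps/2 < `|a - b|].
  apply: contrapT => nab; move: hd; apply/negP; rewrite -leNgt.
  apply: ge_ereal_sup => _ [a Aa [b Ab <-]]; rewrite lee_fin leNgt; apply/negP => h.
  by apply: nab; exists a, b.
have [a' [ma' ha']] : exists a', mink_comb lam U a' /\ sr/2 - eps/4 < `|a' - x0|.
  have [h|h] := ltP (sr/2 - eps/4) `|a - x0|; first by exists a.
  exists b; split => //; have := ler_distD x0 a b; rewrite (distrC x0 b); lra.
case: ma' => y [Hy ea'].
have [f [fc fn fv]] := hb_functional (a' - x0).
pose W i := [set w | `|f (w - y i)| < eps/2].
exists (fun i => U i `&` (D `&` W i)); split.
- move=> i; split.
  + exists (y i); split; first exact: Hy.
    split; first exact: adm_D hU i _ (Hy i).
    by rewrite /W /= subrr linear0 normr0; lra.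
  + exists (D `&` W i); split => //; apply: hweak => w0 Ww0.
    exists 1%N, (fun _ => f), (eps/2 - `|f (w0 - y i)|); split => //.
      by rewrite subr_gt0.
    move=> w /= /(_ ord0) h; rewrite /W /=.
    have -> : w - y i = (w - w0) + (w0 - y i) by rewrite addrA subrK.
    rewrite linearD; apply: le_lt_trans (ler_normD _ _) _.
    move: Ww0; rewrite /W /= => h2; lra.
- move=> z [zz [Hz ->]].
  have e : \sum_i lam i *: zz i - x0 = \sum_i lam i *: (zz i - y i) + (a' - x0).
    rewrite ea' addrA -big_split /=; congr (_ - _); apply: eq_bigr => i _.
    by rewrite -scalerDr subrK.
  have key : f (\sum_i lam i *: zz i - x0) = \sum_i lam i * f (zz i - y i) + `|a' - x0|.
    by rewrite e linearD linear_sum /= fv; congr (_ + _); apply: eq_bigr => i _; rewrite linearZ.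
  have lb : - (eps/2) <= \sum_i lam i * f (zz i - y i).
    case: hlam => l0 l1.
    have -> : - (eps/2) = \sum_i lam i * (- (eps/2)) by rewrite -mulr_suml l1 mul1r.
    apply: ler_sum => i _; apply: ler_wpM2l => //.
    have [_ [_ h]] := Hz i; move: h; rewrite /W /= ltr_norml => /andP [h _].
    exact: ltW.
  rewrite distrC; apply: le_trans (le_trans (ler_norm _) (fn _)).
  rewrite key; lra.
Qed.

Lemma main_sec (eps : R) (k : nat) (x : 'I_k -> X) : bounded_set D -> 0 < eps ->
  exists O : 'I_n -> set X,
    [/\ (forall i, O i !=set0 /\ rel_open tau (Ot i) (O i)),
        (diam (mink_comb lam O) <= subdiam tau lam O + eps%:E)%E &
        (set_dist (range x) (mink_comb lam O) >= subdiam tau lam O * (2^-1)%:E - eps%:E)%E].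
Proof.
move=> bD eps0.
have [M [M0 HM]] : exists M, 0 <= M /\ forall y, D y -> `|y| <= M.
  case: bD => M [Mr HM]; exists (`|M| + 1); split.
    by have := normr_ge0 M; lra.
  move=> y Dy; apply: (HM (`|M| + 1)) => //.
  by have := ler_norm M; lra.
have hOtD : forall i, Ot i `<=` D.
  by move=> i z Oz; apply: hC; apply: (rel_open_sub (hOt i).2).
have admOt : adm Ot Ot.
  by move=> i; split; [exact: (hOt i).1 | exact: rel_open_self].
have s_ge0 : (0 <= subdiam tau lam Ot)%E.
  apply: le_ereal_inf_tmp => _ [U hU <-]; apply: diam_ge0; apply: mink_nonempty.
  by move=> i; exact: (hU i).1.
have s_le : (subdiam tau lam Ot <= (2 * M)%:E)%E.
  apply: le_trans (subdiam_le admOt) _; apply: diam_le.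
  by apply: mink_bound => // i y /hOtD /HM.
have [sr hs] : exists sr, subdiam tau lam Ot = sr%:E.
  by case E: (subdiam tau lam Ot) s_le s_ge0 => [r| |] //; exists r.
have [U0 [hU0 dU0]] : exists U0, adm Ot U0 /\
    (diam (mink_comb lam U0) <= (sr + eps/2)%:E)%E.
  apply: contrapT => nU.
  have : ((sr + eps/2)%:E <= subdiam tau lam Ot)%E.
    apply: le_ereal_inf_tmp => _ [U hU <-]; rewrite leNgt; apply/negP => h.
    by apply: nU; exists U; split => //; exact: ltW.
  by rewrite hs lee_fin; lra.
have iter : forall m, exists U, adm U0 U /\ forall j : 'I_k, (j < m)%N ->
    forall z, mink_comb lam U z -> sr/2 - 3*eps/4 <= `|x j - z|.
  elim=> [|m [U [hU hb]]].
    by exists U0; split; [exact: adm_self hU0|].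
  have hUO := adm_trans hU0 hU.
  case: (ltnP m k) => hm.
  - have [V [hV hVb]] := shrink (x (Ordinal hm)) eps0 hs hUO.
    exists V; split; first exact: adm_trans hU hV.
    move=> j; rewrite ltnS leq_eqVlt => /orP [/eqP ej | jm] z mz.
      have -> : j = Ordinal hm by apply: val_inj.
      exact: hVb.
      have sub : forall i, V i `<=` U i by move=> i; exact: rel_open_sub (hV i).2.
      exact: hb jm z (mink_mono sub mz).
  - exists U; split => // j jm; apply: hb; exact: leq_trans (ltn_ord j) hm.
have [Ob [hO hOb]] := iter k.
have hOO := adm_trans hU0 hO.
have dO : (diam (mink_comb lam Ob) <= (sr + eps/2)%:E)%E.
  apply: le_trans dU0; apply: diam_mono; apply: mink_mono => i.
  exact: rel_open_sub (hO i).2.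
have sO1 : (sr%:E <= subdiam tau lam Ob)%E.
  by rewrite -hs; apply: subdiam_mono => V hV; exact: adm_trans hOO hV.
have sO2 : (subdiam tau lam Ob <= (sr + eps/2)%:E)%E.
  exact: le_trans (subdiam_le (adm_self hOO)) dO.
have [t ht] : exists t, subdiam tau lam Ob = t%:E.
  by case E: (subdiam tau lam Ob) sO1 sO2 => [r| |] //; exists r.
rewrite ht in sO1 sO2; move: sO1 sO2; rewrite !lee_fin => sO1 sO2.
exists Ob; split.
- exact: hOO.
- by apply: le_trans dO _; rewrite ht -EFinD lee_fin; lra.
- rewrite ht -EFinM -EFinB; apply: le_ereal_inf_tmp => _ [a [j _ <-] [b mb <-]].
  rewrite lee_fin; apply: le_trans (hOb j (ltn_ord j) b mb); lra.
Qed.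

End Main.

Unset Implicit Arguments. Set Strict Implicit.

Theorem lemma2p4 (R : realType) (X : completeNormedModType R)
  (D : set X) (tau : set (set X)) (C : set X) (eps : R) (n k : nat)
  (lam : 'I_n -> R) (x : 'I_k -> X) (Ot : 'I_n -> set X) :
  closed D -> bounded_set D -> cvx_set D ->
  is_topology_on D tau -> locally_convex_top tau -> contains_rel_weak D tau ->
  cvx_set C -> C `<=` D -> 0 < eps -> pos_simplex lam ->
  (forall i, Ot i !=set0 /\ rel_open tau C (Ot i)) ->
  exists O : 'I_n -> set X,
    [/\ (forall i, O i !=set0 /\ rel_open tau (Ot i) (O i)),
        (diam (mink_comb lam O) <= subdiam tau lam O + eps%:E)%E &
        (set_dist (range x) (mink_comb lam O) >= subdiam tau lam O * (2^-1)%:E - eps%:E)%E].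
Proof.
move=> cD bD cvD htop lc hweak cvC CD eps0 hlam hOt.
exact: (@main_sec R X D tau n lam C Ot htop hweak hlam CD hOt eps k x bD eps0).
Qed.
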